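(* Let $n\geq 1$. The monoid $M_n$ is left-cancellative and admits conditional right-lcms: any two elements of $M_n$ that admit a common right-multiple admit a right-lcm.
   Context: $M_n$ denotes the monoid with generators $\rho_1,\dots,\rho_n$ and relations $\rho_1\rho_n\rho_i=\rho_{i+1}\rho_n$ for $1\leq i\leq n-1$. $c$ is a right-multiple of $a$ if $c=ab$ for some $b$. A right-lcm of $a,b$ is a common right-multiple of $a$ and $b$ that left-divides every common right-multiple of $a$ and $b$. *)

(* Defs.v *)
From mathcomp Require Import all_boot.
Set Implicit Arguments. Unset Strict Implicit. Unset Printing Implicit Defensive.

(* Elements are represented by words (seq nat) whose letters lie in {1..n};
   the letter k stands for rho_k. *)

Definition word_ok (n : nat) (w : seq nat) : bool := all (fun x => 0 < x <= n) w.

Inductive Mn_eq (n : nat) : seq nat -> seq nat -> Prop :=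
| Mn_rel : forall (u v : seq nat) (i : nat), 1 <= i <= n.-1 ->
    Mn_eq n (u ++ [:: 1; n; i] ++ v) (u ++ [:: i.+1; n] ++ v)
| Mn_refl : forall w, Mn_eq n w w
| Mn_sym : forall w1 w2, Mn_eq n w1 w2 -> Mn_eq n w2 w1
| Mn_trans : forall w1 w2 w3, Mn_eq n w1 w2 -> Mn_eq n w2 w3 -> Mn_eq n w1 w3.

Definition right_multiple (n : nat) (c a : seq nat) : Prop :=
  exists b, word_ok n b /\ Mn_eq n c (a ++ b).

Definition is_right_lcm (n : nat) (a b m : seq nat) : Prop :=
  [/\ word_ok n m, right_multiple n m a, right_multiple n m b &
      forall c, word_ok n c -> right_multiple n c a -> right_multiple n c b ->
        right_multiple n c m].

Definition left_cancellative (n : nat) : Prop :=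
  forall a b c, word_ok n a -> word_ok n b -> word_ok n c ->
    Mn_eq n (a ++ b) (a ++ c) -> Mn_eq n b c.

Definition conditional_right_lcms (n : nat) : Prop :=
  forall a b, word_ok n a -> word_ok n b ->
    (exists c, [/\ word_ok n c, right_multiple n c a & right_multiple n c b]) ->
    exists m, is_right_lcm n a b m.

(* Main.v *)
Require Import Defs.
From mathcomp Require Import all_boot.
From mathcomp Require Import zify.
Set Implicit Arguments. Unset Strict Implicit. Unset Printing Implicit Defensive.

Section M.
Variable n : nat.
Local Notation E := (Mn_eq n).

Lemma E_refl w : E w w. Proof. exact: Mn_refl. Qed.
Lemma E_sym a b : E a b -> E b a. Proof. exact: Mn_sym. Qed.
Lemma E_trans a b c : E a b -> E b c -> E a c. Proof. exact: Mn_trans. Qed.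
Hint Resolve E_refl : core.

Lemma E_cong u v a b : E a b -> E (u ++ a ++ v) (u ++ b ++ v).
Proof.
elim=> {a b} [u0 v0 i Hi|w|w1 w2 _ IH|w1 w2 w3 _ IH1 _ IH2].
- have H := @Mn_rel n (u ++ u0) (v0 ++ v) i Hi.
  by rewrite !catA in H *.
- exact: E_refl.
- exact: E_sym.
- exact: E_trans IH1 IH2.
Qed.

Lemma E_pre u a b : E a b -> E (u ++ a) (u ++ b).
Proof. by move=> H; have := E_cong u [::] H; rewrite !cats0. Qed.
Lemma E_post v a b : E a b -> E (a ++ v) (b ++ v).
Proof. by move=> H; have := E_cong [::] v H. Qed.
Lemma E_cons s a b : E a b -> E (s :: a) (s :: b).
Proof. exact: (E_pre [:: s]). Qed.


Definition wt (w : seq nat) := sumn (map (maxn 1) w).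
Lemma wt_cat a b : wt (a ++ b) = wt a + wt b.
Proof. by rewrite /wt map_cat sumn_cat. Qed.
Lemma wt_cons s a : wt (s :: a) = maxn 1 s + wt a.
Proof. by []. Qed.

Lemma wt_E a b : E a b -> wt a = wt b.
Proof.
elim=> {a b} [u v i Hi|w|w1 w2 _ IH|w1 w2 w3 _ IH1 _ IH2] //.
- rewrite !wt_cat /wt /=. lia.
- by rewrite IH1.
Qed.

Lemma ok_E a b : E a b -> word_ok n a = word_ok n b.
Proof.
elim=> {a b} [u v i Hi|w|w1 w2 _ IH|w1 w2 w3 _ IH1 _ IH2] //.
- rewrite /word_ok !all_cat.
  have -> : all (fun x => 0 < x <= n) [:: 1; n; i] by rewrite /=; lia.
  have -> : all (fun x => 0 < x <= n) [:: i.+1; n] by rewrite /=; lia.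
  by [].
- by rewrite IH1.
Qed.

Definition one (w t : seq nat) : Prop :=
  if w is s :: a then (s = 1 /\ t = a) \/
     (exists y, 2 <= s <= n /\ E a (n :: y) /\ t = [:: n, s.-1 & y])
  else False.

Definition R (w1 w2 : seq nat) : Prop :=
  (head 0 w1 = head 0 w2 /\ E (behead w1) (behead w2)) \/
  (exists t1 t2, one w1 t1 /\ one w2 t2 /\ E t1 t2).

Definition CN W := forall v y, wt (n :: v) < W -> E (n :: v) (n :: y) -> E v y.

Lemma one_uniq W w t t' : CN W -> wt w = W -> one w t -> one w t' -> E t t'.
Proof.
move=> HC; case: w => [|s a] //= Hw.
case=> [[Hs ->]|[y [Hs [Ha ->]]]]; case=> [[Hs' ->]|[y' [Hs' [Ha' ->]]]] //.
- lia.
- lia.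
- apply: E_cons; apply: E_cons; apply: HC.
  + rewrite -(wt_E Ha) -Hw wt_cons; lia.
  + exact: E_trans (E_sym Ha) Ha'.
Qed.

Lemma one_transfer w1 w2 t : head 0 w1 = head 0 w2 -> E (behead w1) (behead w2) ->
  one w2 t -> exists t', one w1 t' /\ E t' t.
Proof.
case: w2 => [|s a] //=; case: w1 => [|s' b] /= hh Hb.
- rewrite -hh; case=> [[? _]|[y [Hs _]]] //; lia.
- subst s'; case=> [[-> ->]|[y [Hs [Ha ->]]]].
  + by exists b; split; [left|].
  + exists [:: n, s.-1 & y]; split => //; right; exists y; split => //; split => //.
    exact: E_trans Hb Ha.
Qed.

Lemma R_sym w1 w2 : R w1 w2 -> R w2 w1.
Proof.
case=> [[h e]|[t1 [t2 [o1 [o2 e]]]]].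
- by left; split; [|apply: E_sym].
- by right; exists t2, t1; split => //; split => //; apply: E_sym.
Qed.

Lemma R_trans W w1 w2 w3 : CN W -> wt w2 = W -> R w1 w2 -> R w2 w3 -> R w1 w3.
Proof.
move=> HC Hw.
case=> [[h12 e12]|[t1 [t2 [o1 [o2 e12]]]]];
case=> [[h23 e23]|[t2' [t3 [o2' [o3 e23]]]]].
- by left; split; [rewrite h12|apply: E_trans e12 e23].
- have [t' [o1' e']] := one_transfer h12 e12 o2'.
  right; exists t', t3; split => //; split => //; exact: E_trans e' e23.
- have [t' [o3' e']] := one_transfer (esym h23) (E_sym e23) o2.
  right; exists t1, t'; split => //; split => //; exact: E_trans e12 (E_sym e').
- have e2 := one_uniq HC Hw o2 o2'.
  right; exists t1, t3; split => //; split => //.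
  exact: E_trans e12 (E_trans e2 e23).
Qed.

Lemma R_main W : CN W -> forall w1 w2, E w1 w2 -> wt w1 = W -> R w1 w2.
Proof.
move=> HC w1 w2.
elim=> {w1 w2} [u v i Hi|w|w1 w2 H12 IH|w1 w2 w3 H12 IH1 H23 IH2] Hw.
- case: u Hw => [|x u] Hw /=.
  + right; exists [:: n, i & v], [:: n, i & v]; split; [by left|split => //].
    right; exists v; split; [lia|by split].
  + left; split => //; exact: Mn_rel.
- by left; split.
- apply: R_sym; apply: IH; by rewrite (wt_E H12).
- apply: (R_trans HC _ (IH1 Hw) (IH2 _)); by rewrite -(wt_E H12).
Qed.

Lemma cancel1_W W : forall s a b, wt (s :: a) = W -> E (s :: a) (s :: b) -> E a b.
Proof.
elim/ltn_ind: W => W IH s a b Hw He.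
have HC : CN W by move=> v y Hv; apply: (IH _ Hv n v y erefl).
case: (R_main HC He Hw) => [[_ /= ?]//|[t1 [t2 [o1 [o2 e]]]]].
move: o1 o2 e => /= [[Hs ->]|[y1 [Hs [Ha ->]]]] [[Hs' ->]|[y2 [Hs' [Hb ->]]]] // e.
- lia.
- lia.
- have e1 : E [:: s.-1 & y1] [:: s.-1 & y2].
    apply: (IH _ _ n _ _ erefl e).
    rewrite -Hw (wt_cons s a) (wt_E Ha) !wt_cons; lia.
  have e2 : E y1 y2.
    apply: (IH _ _ s.-1 _ _ erefl e1).
    rewrite -Hw (wt_cons s a) (wt_E Ha) !wt_cons; lia.
  exact: E_trans Ha (E_trans (E_cons n e2) (E_sym Hb)).
Qed.

Lemma cancel1 s a b : E (s :: a) (s :: b) -> E a b.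
Proof. exact: cancel1_W erefl. Qed.

Lemma cancel_cat u a b : E (u ++ a) (u ++ b) -> E a b.
Proof. elim: u => //= x u IH H; apply: IH; exact: cancel1 H. Qed.

Lemma R_all w1 w2 : E w1 w2 -> R w1 w2.
Proof.
move=> H; apply: (R_main (W := wt w1)) => //.
by move=> v y _; apply: cancel1.
Qed.

Lemma char s t x y : s != t -> E (s :: x) (t :: y) ->
  exists t1 t2, one (s :: x) t1 /\ one (t :: y) t2 /\ E t1 t2.
Proof.
move=> neq H; case: (R_all H) => [[/= hst _]|//].
by rewrite hst eqxx in neq.
Qed.

Lemma char1 k x y : 2 <= k <= n -> E (1 :: x) (k :: y) ->
  exists y', E y (n :: y') /\ E x [:: n, k.-1 & y'].
Proof.
move=> Hk H; have neq : 1 != k by apply/eqP; lia.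
have [t1 [t2 [o1 [o2 e]]]] := char neq H.
move: o1 o2 e => /= [[_ ->]|[y1 [Hs _]]]; last by lia.
case=> [[hk _]|[y' [_ [Hy ->]]]]; first by lia.
by move=> e; exists y'.
Qed.

Lemma char2 j k x y : 2 <= j <= n -> 2 <= k <= n -> j != k -> E (j :: x) (k :: y) ->
  exists x' y', [/\ E x (n :: x'), E y (n :: y') & E [:: j.-1 & x'] [:: k.-1 & y']].
Proof.
move=> Hj Hk neq H.
have [t1 [t2 [o1 [o2 e]]]] := char neq H.
move: o1 o2 e => /= [[hj _]|[x' [_ [Hx ->]]]]; first by lia.
case=> [[hk _]|[y' [_ [Hy ->]]]]; first by lia.
move=> e; exists x', y'; split => //; exact: cancel1 e.
Qed.

Definition dvd a c := exists b, E c (a ++ b).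
Definition islcm a b m := [/\ dvd a m, dvd b m & forall e, dvd a e -> dvd b e -> dvd m e].

Lemma dvd_refl a : dvd a a.
Proof. by exists [::]; rewrite cats0. Qed.

Lemma dvd_nil c : dvd [::] c.
Proof. by exists c. Qed.

Lemma dvd_trans a b c : dvd a b -> dvd b c -> dvd a c.
Proof.
move=> [x Hb] [y Hc]; exists (x ++ y); rewrite catA.
exact: E_trans Hc (E_post y Hb).
Qed.

Lemma dvd_Er a c c' : E c c' -> dvd a c -> dvd a c'.
Proof. by move=> H [x Hx]; exists x; apply: E_trans (E_sym H) Hx. Qed.

Lemma dvd_El a a' c : E a a' -> dvd a c -> dvd a' c.
Proof. by move=> H [x Hx]; exists x; apply: E_trans Hx (E_post x H). Qed.

Lemma dvd_pre u a c : dvd a c -> dvd (u ++ a) (u ++ c).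
Proof. by move=> [x Hx]; exists x; rewrite -catA; apply: E_pre. Qed.

Lemma dvd_cons1 s a : dvd [:: s] (s :: a).
Proof. by exists a. Qed.

Lemma islcm_sym a b m : islcm a b m -> islcm b a m.
Proof. by case=> h1 h2 h3; split => // e H1 H2; apply: h3. Qed.

Lemma islcm_El a a' b m : E a a' -> islcm a b m -> islcm a' b m.
Proof.
move=> H [h1 h2 h3]; split => //; first exact: dvd_El H h1.
by move=> e H1 H2; apply: h3 => //; apply: dvd_El (E_sym H) H1.
Qed.

Lemma islcm_pre u a b m : islcm a b m -> islcm (u ++ a) (u ++ b) (u ++ m).
Proof.
case=> h1 h2 h3; split; try exact: dvd_pre.
move=> e [x Hx] [y Hy].
have Hf : E (u ++ (a ++ x)) (u ++ (b ++ y)).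
  rewrite !catA; exact: E_trans (E_sym Hx) Hy.
have Hbf := cancel_cat Hf.
have [z Hz] := h3 (a ++ x) (ex_intro _ x (E_refl _)) (ex_intro _ y Hbf).
exists z; rewrite -catA; rewrite -catA in Hx.
exact: E_trans Hx (E_pre u Hz).
Qed.

Lemma islcm_assoc a b m0 la lb m :
  (forall e, dvd a e -> dvd b e -> dvd m0 e) ->
  islcm m0 a la -> islcm m0 b lb -> islcm la lb m -> islcm a b m.
Proof.
move=> H [_ a1 a3] [_ b1 b3] [l1 l2 l3]; split.
- exact: dvd_trans a1 l1.
- exact: dvd_trans b1 l2.
- move=> e Ha Hb; have Hm := H e Ha Hb; apply: l3; [exact: a3|exact: b3].
Qed.

Lemma relk k p : 2 <= k <= n -> E [:: 1, n, k.-1 & p] [:: k, n & p].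
Proof.
move=> Hk; have Hi : 1 <= k.-1 <= n.-1 by lia.
have H := @Mn_rel n [::] p k.-1 Hi.
have Hk1 : k.-1.+1 = k by lia.
by move: H; rewrite /= Hk1.
Qed.

Lemma lcm_1k k : 2 <= k <= n -> islcm [:: 1] [:: k] [:: 1; n; k.-1].
Proof.
move=> Hk; split.
- by exists [:: n; k.-1].
- by exists [:: n]; apply: relk.
- move=> e [x Hx] [y Hy].
  have [y' [Hy' Hx']] := char1 Hk (E_trans (E_sym Hx) Hy).
  by exists y'; apply: E_trans Hx (E_cons 1 Hx').
Qed.

Lemma lcm_jk j k r : 2 <= j <= n -> 2 <= k <= n -> j != k ->
  islcm [:: j.-1] [:: k.-1] r -> exists m0, islcm [:: j] [:: k] m0.
Proof.
move=> Hj Hk neq [[p Hp] [q Hq] Hl].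
exists [:: j, n & p]; split.
- by exists [:: n & p].
- exists [:: n & q].
  apply: E_trans (E_sym (relk p Hj)) _.
  apply: E_trans (E_cons 1 (E_cons n (E_sym Hp))) _.
  apply: E_trans (E_cons 1 (E_cons n Hq)) _.
  exact: relk.
- move=> e [x Hx] [y Hy].
  have [x' [y' [Hx' Hy' Hxy]]] := char2 Hj Hk neq (E_trans (E_sym Hx) Hy).
  have [g Hg] := Hl [:: j.-1 & x'] (ex_intro _ x' (E_refl _)) (ex_intro _ y' Hxy).
  have Hpg : E x' (p ++ g).
    apply: (cancel1 (s := j.-1)).
    exact: E_trans Hg (E_post g Hp).
  exists g.
  exact: E_trans Hx (E_cons j (E_trans Hx' (E_cons n Hpg))).
Qed.

Definition LCMS W := forall a b c, wt c < W -> dvd a c -> dvd b c -> exists m, islcm a b m.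

Lemma letter_lcm W s t c : LCMS W -> s != t -> wt c = W -> dvd [:: s] c -> dvd [:: t] c ->
  exists m0, islcm [:: s] [:: t] m0.
Proof.
move=> IH neq Hw [x Hx] [y Hy].
have H : E (s :: x) (t :: y) := E_trans (E_sym Hx) Hy.
have [t1 [t2 [o1 [o2 e]]]] := char neq H.
move: o1 o2 e => /= [[hs ->]|[x' [Hs [Hx' ->]]]] [[ht ->]|[y' [Ht [Hy' ->]]]] e.
- by move: neq; rewrite hs ht.
- by subst s; exists [:: 1; n; t.-1]; apply: lcm_1k.
- by subst t; exists [:: 1; n; s.-1]; apply: islcm_sym; apply: lcm_1k.
- have e' := cancel1 e.
  have [r Hr] : exists r, islcm [:: s.-1] [:: t.-1] r.
    apply: (IH _ _ [:: s.-1 & x']).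
    + rewrite -Hw (wt_E Hx) (wt_cons s x) (wt_E Hx') !wt_cons; lia.
    + by exists x'.
    + by exists y'.
  exact: lcm_jk Hs Ht neq Hr.
Qed.

Lemma lcm_ex W : forall a b c, wt c = W -> dvd a c -> dvd b c -> exists m, islcm a b m.
Proof.
elim/ltn_ind: W => W IH a b c Hw Ha Hb.
have LC : LCMS W by move=> a' b' c' Hc'; exact: (IH _ Hc' a' b' c' erefl).
case: a Ha => [|s a'] Ha.
  by exists b; split => //; [exact: dvd_nil|exact: dvd_refl].
case: b Hb => [|t b'] Hb.
  by exists (s :: a'); split => //; [exact: dvd_refl|exact: dvd_nil].
case: (eqVneq s t) Hb => [<-|neq] Hb.
- case: Ha => x Hx; case: Hb => y Hy.
  have Hxy : E (a' ++ x) (b' ++ y) := cancel1 (E_trans (E_sym Hx) Hy).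
  have [m' Hm'] : exists m', islcm a' b' m'.
    apply: (LC _ _ (a' ++ x)).
    + rewrite -Hw (wt_E Hx) cat_cons wt_cons; lia.
    + by exists x.
    + by exists y.
  by exists (s :: m'); apply: (islcm_pre [:: s] Hm').
- have Hs : dvd [:: s] c := dvd_trans (dvd_cons1 s a') Ha.
  have Ht : dvd [:: t] c := dvd_trans (dvd_cons1 t b') Hb.
  have [m0 [[s' Hs'] [t' Ht'] Hm0]] := letter_lcm LC neq Hw Hs Ht.
  have Hm0c := Hm0 c Hs Ht; case: (Hm0c) => d Hd.
  have wm0 : wt m0 = maxn 1 s + wt s' by rewrite (wt_E Hs').
  have wc : W = wt m0 + wt d by rewrite -Hw (wt_E Hd) wt_cat.
  have [m1 HL1] : exists m1, islcm s' a' m1.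
    case: Ha => x Hx.
    have e1 : E (s' ++ d) (a' ++ x).
      apply: (cancel1 (s := s)).
      exact: E_trans (E_sym (E_post d Hs')) (E_trans (E_sym Hd) Hx).
    apply: (LC _ _ (s' ++ d)).
    + rewrite wt_cat; lia.
    + by exists d.
    + by exists x.
  have [m2 HL2] : exists m2, islcm t' b' m2.
    case: Hb => x Hx.
    have e1 : E (t' ++ d) (b' ++ x).
      apply: (cancel1 (s := t)).
      exact: E_trans (E_sym (E_post d Ht')) (E_trans (E_sym Hd) Hx).
    apply: (LC _ _ (t' ++ d)).
    + have wm0' : wt m0 = maxn 1 t + wt t' by rewrite (wt_E Ht').
      rewrite wt_cat; lia.
    + by exists d.
    + by exists x.
  have L1 : islcm m0 (s :: a') (s :: m1) := islcm_El (E_sym Hs') (islcm_pre [:: s] HL1).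
  have L2 : islcm m0 (t :: b') (t :: m2) := islcm_El (E_sym Ht') (islcm_pre [:: t] HL2).
  case: (L1) => [[p Hp] _ L13]; case: (L2) => [[q Hq] _ L23].
  case: (L13 c Hm0c Ha) => z Hz; case: (L23 c Hm0c Hb) => z' Hz'.
  have e2 : E (m0 ++ (p ++ z)) (m0 ++ (q ++ z')).
    rewrite !catA.
    apply: E_trans (E_sym (E_post z Hp)) _.
    apply: E_trans (E_sym Hz) _.
    apply: E_trans Hz' _.
    exact: (@E_post z' _ _ Hq).
  have e3 := cancel_cat e2.
  have [r HL3] : exists r, islcm p q r.
    apply: (LC _ _ (p ++ z)).
    + have : W = wt m0 + wt (p ++ z).
        by rewrite -Hw (wt_E Hz) (wt_E (E_post z Hp)) -catA wt_cat.
      lia.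
    + by exists z.
    + by exists z'.
  have L3 : islcm (s :: m1) (t :: m2) (m0 ++ r).
    apply: islcm_El (E_sym Hp) _; apply: islcm_sym.
    apply: islcm_El (E_sym Hq) _; apply: islcm_sym.
    exact: islcm_pre.
  exists (m0 ++ r); apply: (islcm_assoc _ L1 L2 L3).
  move=> e Hae Hbe; apply: Hm0.
  + exact: dvd_trans (dvd_cons1 s a') Hae.
  + exact: dvd_trans (dvd_cons1 t b') Hbe.
Qed.

Lemma ok_split c a b : word_ok n c -> E c (a ++ b) -> word_ok n a /\ word_ok n b.
Proof. by move=> Hc H; move: Hc; rewrite (ok_E H) /word_ok all_cat => /andP. Qed.

End M.

Theorem proposition4p9 (n : nat) (hn : 1 <= n) :
  left_cancellative n /\ conditional_right_lcms n.
Proof.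
split.
- by move=> a b c _ _ _; apply: cancel_cat.
- move=> a b Ha Hb [c [Hc [x [_ Hx]] [y [_ Hy]]]].
  have [m [Ham Hbm Hl]] := @lcm_ex n (wt c) a b c erefl (ex_intro _ x Hx) (ex_intro _ y Hy).
  have [z Hz] := Hl c (ex_intro _ x Hx) (ex_intro _ y Hy).
  have [okm _] := ok_split Hc Hz.
  exists m; split => //.
  + case: Ham => w Hw; exists w; split => //; exact: (ok_split okm Hw).2.
  + case: Hbm => w Hw; exists w; split => //; exact: (ok_split okm Hw).2.
  + move=> e He [u [_ Hu]] [v [_ Hv]].
    have [w Hw] := Hl e (ex_intro _ u Hu) (ex_intro _ v Hv).
    exists w; split => //; exact: (ok_split He Hw).2.
Qed.
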